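(* With the notation below, let $I_n=\langle x_1,\ldots,x_n\rangle\subseteq S$. Then $H_0(\mathcal{FK}_\bullet(x_1,\ldots,x_n))\cong S/I_n$ as left $S[\Theta;\varphi]$-modules, and $H_{n+1}(\mathcal{FK}_\bullet(x_1,\ldots,x_n))=0$ (i.e. $\partial_{n+1}$ is injective).
   Context: Let $\mathbb{K}$ be a commutative ring and $S=\mathbb{K}[x_1,\ldots,x_n]$. Let $\varphi:S\to S$ be a flat $\mathbb{K}$-algebra endomorphism with $\varphi(x_i)\in\langle x_i\rangle$ for each $i$, and fix nonzero $s_1,\ldots,s_n\in S$ with $\varphi(x_i)=s_ix_i$. The left skew polynomial ring $S[\Theta;\varphi]$ is the ring which is a free left $S$-module with basis $\{\Theta^i\}_{i\geq0}$ and multiplication determined by $\Theta a=\varphi(a)\Theta$ for $a\in S$. $S/I_n$ is a left $S[\Theta;\varphi]$-module with $S$ acting naturally and $\Theta$ acting by the map induced by $\varphi$ (well defined since $\varphi(I_n)\subseteq I_n$). For $J=\{j_1<\cdots<j_k\}\subseteq\{1,\ldots,n\}$ write $s_J=s_{j_1}\cdots s_{j_k}$ (with $s_\emptyset=1$) and $\mathbf{e}_J=\mathbf{e}_{j_1}\wedge\cdots\wedge\mathbf{e}_{j_k}$. The $\varphi$-Koszul complex $\mathcal{FK}_\bullet(x_1,\ldots,x_n)$ is defined as follows: for $0\leq l\leq n+1$, $\mathcal{FK}_l$ is the free left $S[\Theta;\varphi]$-module with basis $\{\mathbf{e}_I : |I|=l\}\cup\{\mathbf{e}_J\wedge u : |J|=l-1\}$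 (so $\mathcal{FK}_0=S[\Theta;\varphi]$ with basis $\mathbf{e}_\emptyset$, and $\mathcal{FK}_{n+1}$ has the single basis element $\mathbf{e}_{\{1,\ldots,n\}}\wedge u$), and $\partial_l:\mathcal{FK}_l\to\mathcal{FK}_{l-1}$ ($1\le l\le n+1$; $\partial_0=\partial_{n+2}=0$) is the left $S[\Theta;\varphi]$-linear map given on basis elements by $\partial_l(\mathbf{e}_I)=\sum_{r=1}^{l}(-1)^{r-1}x_{i_r}\,\mathbf{e}_{I\setminus\{i_r\}}$ for $I=\{i_1<\cdots<i_l\}$, and $\partial_l(\mathbf{e}_J\wedge u)=(-1)^{l-1}(\Theta-s_J)\,\mathbf{e}_J+\sum_{r=1}^{l-1}(-1)^{r-1}\varphi(x_{j_r})\,\mathbf{e}_{J\setminus\{j_r\}}\wedge u$ for $J=\{j_1<\cdots<j_{l-1}\}$ (in particular $\partial_1(u)=\Theta-1$). Homology is $H_l=\ker\partial_l/\operatorname{im}\partial_{l+1}$. *)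

(* Defs.v *)
From HB Require Import structures.
From mathcomp Require Import all_boot all_order all_algebra.
Set Implicit Arguments. Unset Strict Implicit. Unset Printing Implicit Defensive.
Import Order.TTheory GRing.Theory Num.Theory.
Local Open Scope ring_scope.

(* S = K[x_1,...,x_n], realised as iterated univariate polynomials. *)
Fixpoint mpoly (K : comNzRingType) (n : nat) : comNzRingType :=
  match n with
  | 0 => K
  | m.+1 => GRing.ComNzRing.clone {poly (mpoly K m)} _
  end.

Fixpoint mconst (K : comNzRingType) (n : nat) (c : K) : mpoly K n :=
  match n return mpoly K n with
  | 0 => c
  | m.+1 => ((mconst m c)%:P : {poly mpoly K m})
  end.

Fixpoint mvar (K : comNzRingType) (n : nat) (i : nat) : mpoly K n :=
  match n return mpoly K n with
  | 0 => 0
  | m.+1 => (if i == m then 'X else (mvar K m i)%:P : {poly mpoly K m})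
  end.

(* x_{i+1} for i : 'I_n *)
Definition xvar (K : comNzRingType) (n : nat) (i : 'I_n) : mpoly K n := mvar K n i.

Section Skew.
Variables (K : comNzRingType) (n : nat).
Local Notation S := (mpoly K n).
Variable phi : S -> S.

(* phi is flat (S is a flat S-module via phi), via the equational criterion:
   every relation  sum_j phi(a_j) f_j = 0  is trivial. *)
Definition flat_endo : Prop :=
  forall (k : nat) (a f : 'I_k -> S),
    \sum_(j < k) phi (a j) * f j = 0 ->
    exists (m : nat) (b : 'I_k -> 'I_m -> S) (g : 'I_m -> S),
      (forall j, f j = \sum_(l < m) phi (b j l) * g l) /\
      (forall l, \sum_(j < k) a j * b j l = 0).

(* S[Theta; phi]: elements sum_i a_i Theta^i are encoded as the polynomials
   sum_i a_i 'X^i in {poly S}; addition and left S-scaling agree, and the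
   multiplication is the skew one: (a Theta^i)(b Theta^j) = a phi^i(b) Theta^(i+j). *)
Definition skewmul (p q : {poly S}) : {poly S} :=
  \sum_(i < size p) (p`_i *: 'X^i) * map_poly (iter i phi) q.

(* action of S[Theta;phi] on S (representatives of S/I_n): Theta acts by phi *)
Definition skew_act (p : {poly S}) (f : S) : S :=
  \sum_(i < size p) p`_i * iter i phi f.

Definition In_ideal (f : S) : Prop :=
  exists g : 'I_n -> S, f = \sum_(i < n) g i * xvar K i.

(* Basis of the phi-Koszul complex: (J, false) is e_J, (J, true) is e_J /\ u.
   Its homological degree is |J| + [u present]. *)
Definition basis := ({set 'I_n} * bool)%type.
Definition bdeg (b : basis) : nat := #|b.1| + b.2.

Definition pos (I : {set 'I_n}) (i : 'I_n) : nat := #|[set j in I | (j < i)%N]|.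

Variable s : 'I_n -> S.
Definition sJ (J : {set 'I_n}) : S := \prod_(j in J) s j.

(* coefficient of the basis element g in the differential of basis element b *)
Definition bd (b g : basis) : {poly S} :=
  let I := b.1 in
  if ~~ b.2 then
    \sum_(i in I) (if g == (I :\ i, false)
                   then (-1) ^+ pos I i * (xvar K i)%:P else 0)
  else
    (if g == (I, false) then (-1) ^+ #|I| * ('X - (sJ I)%:P) else 0) +
    \sum_(i in I) (if g == (I :\ i, true)
                   then (-1) ^+ pos I i * (phi (xvar K i))%:P else 0).

(* the differential, extended left S[Theta;phi]-linearly to the direct sum of
   all FK_l; a chain is its coefficient function on the basis. *)
Definition bdmap (c : basis -> {poly S}) (g : basis) : {poly S} :=
  \sum_(b : basis) skewmul (c b) (bd b g).

(* image of partial_1 inside FK_0 = S[Theta;phi] (coefficient of e_emptyset) *)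
Definition im_d1 (p : {poly S}) : Prop :=
  exists c : basis -> {poly S},
    (forall b, bdeg b != 1%N -> c b = 0) /\ p = bdmap c (set0, false).

End Skew.

(* Isomorphism M/PM ~= N/PN of left modules over a ring acting via actM, actN,
   expressed on representatives: F induces a well-defined bijection of the
   quotients which is additive and commutes with the action. *)
Definition lmod_quot_iso (R : Type) (M N : zmodType)
    (actM : R -> M -> M) (actN : R -> N -> N)
    (PM : M -> Prop) (PN : N -> Prop) : Prop :=
  exists F : M -> N,
    [/\ forall m m', PM (m - m') <-> PN (F m - F m'),
        forall y, exists m, PN (F m - y),
        forall m m', PN (F (m + m') - (F m + F m')) &
        forall r m, PN (F (actM r m) - actN r (F m))].

(* Main.v *)
Require Import Defs.
From HB Require Import structures.
From mathcomp Require Import all_boot all_order all_algebra.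
Import GRing.Theory.
Local Open Scope ring_scope.

Section Aux.
Variables (K : comNzRingType) (n : nat).
Local Notation S := (mpoly K n).
Variable phi : {rmorphism S -> S}.
Variable s : 'I_n -> S.

Lemma it0 k : iter k phi 0 = 0.
Proof. by elim: k => //= k ->; rewrite rmorph0. Qed.
Lemma it1 k : iter k phi 1 = 1.
Proof. by elim: k => //= k ->; rewrite rmorph1. Qed.
Lemma itD k a b : iter k phi (a + b) = iter k phi a + iter k phi b.
Proof. by elim: k => //= k ->; rewrite rmorphD. Qed.
Lemma itN k a : iter k phi (- a) = - iter k phi a.
Proof. by elim: k => //= k ->; rewrite rmorphN. Qed.
Lemma itM k a b : iter k phi (a * b) = iter k phi a * iter k phi b.
Proof. by elim: k => //= k ->; rewrite rmorphM. Qed.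
Lemma it_sum k (I : finType) (F : I -> S) :
  iter k phi (\sum_(i : I) F i) = \sum_(i : I) iter k phi (F i).
Proof.
apply: (big_morph (iter k phi)); [exact: itD | exact: it0].
Qed.

Lemma skewmul_wide N (p r : {poly S}) : (size p <= N)%N ->
  skewmul phi p r = \sum_(i < N) (p`_i *: 'X^i) * map_poly (iter i phi) r.
Proof.
move=> hN; rewrite /skewmul (big_ord_widen N (fun i => (p`_i *: 'X^i) * map_poly (iter i phi) r) hN).
rewrite big_mkcond; apply: eq_bigr => i _; case: ltnP => // h.
by rewrite nth_default // scale0r mul0r.
Qed.

Lemma skewmul0 r : skewmul phi 0 r = 0.
Proof. by rewrite /skewmul size_poly0 big_ord0. Qed.

Lemma skewmulD p q r : skewmul phi (p + q) r = skewmul phi p r + skewmul phi q r.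
Proof.
pose N := maxn (size p) (size q).
rewrite (@skewmul_wide N p) ?leq_maxl // (@skewmul_wide N q) ?leq_maxr //.
rewrite (@skewmul_wide N) ?size_add //.
by rewrite -big_split; apply: eq_bigr => i _; rewrite coefD scalerDl mulrDl.
Qed.

Lemma skewmul_sum (I : finType) (F : I -> {poly S}) r :
  skewmul phi (\sum_(i : I) F i) r = \sum_(i : I) skewmul phi (F i) r.
Proof.
apply: (big_morph (fun p => skewmul phi p r)); [exact: (fun p q => skewmulD p q r) | exact: skewmul0].
Qed.

Lemma skewmul_fix p r : (forall i, map_poly (iter i phi) r = r) ->
  skewmul phi p r = p * r.
Proof.
move=> h; rewrite /skewmul.
have -> : p * r = (\sum_(i < size p) p`_i *: 'X^i) * r by rewrite -poly_def coefK.
rewrite mulr_suml; apply: eq_bigr => i _; by rewrite h.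
Qed.

Lemma skewmulC a r : skewmul phi a%:P r = a%:P * r.
Proof.
rewrite (@skewmul_wide 1) ?size_polyC ?leq_b1 // big_ord1 /= coefC /=.
rewrite expr0 alg_polyC; congr (_ * _).
by apply/polyP => j; rewrite coef_map_id0.
Qed.

Lemma map_it_hor k (m : {poly S}) : (map_poly (iter k phi) m).[1] = iter k phi m.[1].
Proof.
rewrite (@horner_coef_wide _ (size m)); last first.
  by rewrite /map_poly; exact: size_poly.
rewrite horner_coef it_sum; apply: eq_bigr => i _.
by rewrite coef_map_id0 ?it0 // !expr1n !mulr1.
Qed.

Lemma skewmul_hor r m : (skewmul phi r m).[1] = skew_act phi r m.[1].
Proof.
rewrite /skewmul /skew_act horner_sum; apply: eq_bigr => i _.
by rewrite hornerM map_it_hor hornerZ hornerXn expr1n mulr1.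
Qed.


Local Notation In := (@In_ideal K n).

Lemma In0 : In 0.
Proof. by exists (fun _ => 0); rewrite big1 // => i _; rewrite mul0r. Qed.
Lemma InD a b : In a -> In b -> In (a + b).
Proof.
move=> [g ->] [h ->]; exists (fun i => g i + h i).
by rewrite -big_split; apply: eq_bigr => i _; rewrite mulrDl.
Qed.
Lemma InM c a : In a -> In (c * a).
Proof.
move=> [g ->]; exists (fun i => c * g i).
by rewrite mulr_sumr; apply: eq_bigr => i _; rewrite mulrA.
Qed.
Lemma In_sum (I : finType) (P : pred I) (F : I -> S) :
  (forall i, P i -> In (F i)) -> In (\sum_(i | P i) F i).
Proof.
move=> h; apply: (big_ind In) => //; [exact: In0 | exact: InD].
Qed.
Lemma In_x i : In (xvar K i).
Proof.
exists (fun j => if j == i then 1 else 0).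
rewrite (bigD1 i) //= eqxx mul1r big1 ?addr0 // => j /negbTE ->.
by rewrite mul0r.
Qed.
Lemma In_N a : In a -> In (- a).
Proof. by move=> h; rewrite -mulN1r; apply: InM. Qed.

Hypothesis phi_x : forall i : 'I_n, phi (xvar K i) = s i * xvar K i.

Lemma In_phi a : In a -> In (phi a).
Proof.
move=> [g ->]; exists (fun i => phi (g i) * s i).
rewrite rmorph_sum; apply: eq_bigr => i _; by rewrite rmorphM phi_x mulrA.
Qed.
Lemma In_it k a : In a -> In (iter k phi a).
Proof. by elim: k => //= k IH h; apply: In_phi; apply: IH. Qed.
Lemma In_act p a : In a -> In (skew_act phi p a).
Proof. by move=> h; apply: In_sum => i _; apply: InM; apply: In_it. Qed.
Lemma skew_act0 a : skew_act phi 0 a = 0.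
Proof. by rewrite /skew_act size_poly0 big_ord0. Qed.

Lemma imd1_In q : im_d1 phi s q -> In q.[1].
Proof.
move=> [c [hc ->]]; rewrite /bdmap horner_sum; apply: In_sum => b _.
rewrite skewmul_hor.
have [/eqP h1 | h1] := eqVneq (bdeg b) 1%N; last first.
  by rewrite hc // skew_act0; exact: In0.
apply: In_act; case: b h1 => I [] /= h1.
  have I0 : I = set0.
    by apply/eqP; rewrite -cards_eq0; move: h1; rewrite /bdeg /= addn1 => /eqP [] ->.
  subst I; rewrite /bd /= eqxx big_set0 addr0 cards0 expr0 mul1r /sJ big_set0.
  rewrite hornerXsubC subrr; exact: In0.
rewrite /bd /= horner_sum; apply: In_sum => i _; case: ifP => _.
  by rewrite hornerM hornerC; apply: InM; apply: In_x.
by rewrite horner0; apply: In0.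
Qed.

Lemma sum_if_eq (T : finType) (x : T) (v : {poly S}) :
  \sum_(b : T) (if b == x then v else 0) = v.
Proof. by rewrite -big_mkcond big_pred1_eq. Qed.

Lemma map_XsubC1 i : map_poly (iter i phi) ('X - 1%:P) = 'X - 1%:P.
Proof.
apply/polyP => j; rewrite coef_map_id0 ?it0 // coefB coefX coefC.
by case: (j == 1)%N; case: (j == 0)%N; rewrite ?subrr ?sub0r ?subr0 ?itN ?it0 ?it1.
Qed.

Lemma In_imd1 q : In q.[1] -> im_d1 phi s q.
Proof.
move=> [g hg].
have : root (q - (q.[1])%:P) 1 by rewrite /root hornerD hornerN hornerC subrr.
move/factor_theorem => [p hp].
pose c := fun b : basis n => if b.2 then (if b.1 == set0 then p else 0)
   else \sum_(i < n) (if b.1 == [set i] then (g i)%:P else 0).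
exists c; split.
  move=> [I []]; rewrite /c /bdeg /=.
    by case: ifP => // /eqP ->; rewrite cards0.
  move=> hI; apply: big1 => i _; case: eqP => // hIi.
  by rewrite hIi cards1 in hI.
have E : forall b, skewmul phi (c b) (bd phi s b (set0, false)) =
  (if b == (set0, true) then skewmul phi p (bd phi s (set0, true) (set0, false)) else 0)
  + \sum_(i < n) (if b == ([set i], false) then
       skewmul phi (g i)%:P (bd phi s ([set i], false) (set0, false)) else 0).
  move=> [I []]; rewrite /c /=.
    rewrite big1 ?addr0; last by move=> i _; rewrite xpair_eqE andbF.
    rewrite xpair_eqE andbT; case: eqP => [-> //|_]; exact: skewmul0.
  rewrite xpair_eqE andbF add0r skewmul_sum; apply: eq_bigr => i _.
  rewrite xpair_eqE andbT; case: eqP => [-> //|_]; exact: skewmul0.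
rewrite /bdmap (eq_bigr _ (fun b _ => E b)) big_split /= sum_if_eq.
rewrite exchange_big /=; under eq_bigr do rewrite sum_if_eq.
rewrite /bd /= eqxx big_set0 addr0 cards0 expr0 mul1r /sJ big_set0.
rewrite skewmul_fix; last exact: map_XsubC1.
rewrite -hp.
under eq_bigr do rewrite big_set1 setDv eqxx.
have P0 : forall i : 'I_n, pos [set i] i = 0%N.
  move=> i; apply/eqP; rewrite cards_eq0; apply/eqP/setP => j.
  rewrite !inE; case: eqP => // ->; by rewrite ltnn.
under eq_bigr do rewrite P0 expr0 mul1r skewmulC -polyCM.
by rewrite -raddf_sum -hg subrK.
Qed.

Lemma skewmul_top (p r : {poly S}) : p != 0 -> (forall j, (1 < j)%N -> r`_j = 0) ->
  (skewmul phi p r)`_(size p) = lead_coef p * iter (size p).-1 phi r`_1.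
Proof.
move=> p0 hr; rewrite /skewmul coef_sum /lead_coef.
have : size p != 0%N by rewrite size_poly_eq0.
case: (size p) => // d _ /=.
rewrite big_ord_recr /= big1 ?add0r; last first.
  move=> i _; rewrite -scalerAl coefZ coefXnM.
  have hi : (d.+1 < i)%N = false by apply/negbTE; rewrite -leqNgt ltnW // ltnS ltnW.
  rewrite hi coef_map_id0 ?it0 // hr ?it0 ?mulr0 //.
  by rewrite ltn_subRL addn1 ltnS ltn_ord.
rewrite -scalerAl coefZ coefXnM ltnNge leqnSn /= coef_map_id0 ?it0 //.
by rewrite subSnn.
Qed.
End Aux.





Theorem proposition3 (K : comNzRingType) (n : nat)
    (phi : {rmorphism mpoly K n -> mpoly K n})
    (s : 'I_n -> mpoly K n)
    (phiK : forall c : K, phi (mconst n c) = mconst n c)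
    (phi_flat : flat_endo phi)
    (phi_x : forall i : 'I_n, phi (xvar K i) = s i * xvar K i)
    (s_nz : forall i : 'I_n, s i != 0) :
  lmod_quot_iso (skewmul phi) (skew_act phi) (im_d1 phi s) (@In_ideal K n) /\
  (forall c : basis n -> {poly mpoly K n},
     (forall b, bdeg b != n.+1 -> c b = 0) ->
     (forall g, bdmap phi s c g = 0) ->
     forall b, c b = 0).
Proof.
split.
  exists (fun p => p.[1]); split.
  - move=> m m'; rewrite -hornerN -hornerD; split.
      exact: imd1_In phi_x _.
    exact: In_imd1.
  - move=> y; exists y%:P; rewrite hornerC subrr; exact: In0.
  - move=> m m'; rewrite hornerD subrr; exact: In0.
  - move=> r m; rewrite skewmul_hor subrr; exact: In0.
move=> c hc hd.
have hT : forall b, b != (setT, true) -> c b = 0.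
  move=> [I bo] hb; apply: hc; rewrite /bdeg /=; apply/negP => /eqP h.
  have hI := max_card (mem I); rewrite card_ord in hI.
  case: bo h hb => /= h hb.
    apply/negP: hb; rewrite negbK xpair_eqE andbT eqEcard subsetT cardsT card_ord.
    by move: h; rewrite addn1 => -[->]; rewrite leqnn.
  by move: h hI; rewrite addn0 => ->; rewrite ltnn.
have cT : c (setT, true) = 0.
  have := hd (setT, false); rewrite /bdmap (bigD1 (setT, true)) //= big1 ?addr0; last first.
    by move=> b hb; rewrite hT // skewmul0.
  rewrite /bd /= eqxx big1 ?addr0; last by move=> i _; rewrite xpair_eqE andbF.
  have [->//|p0] := eqVneq (c (setT, true)) 0.
  move=> /(congr1 (fun q : {poly _} => q`_(size (c (setT, true))))).
  rewrite skewmul_top //; last first.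
    move=> j hj; rewrite -signr_odd; case: (odd _); rewrite ?expr1 ?expr0 ?mulN1r ?mul1r ?coefN;
    rewrite coefB coefX coefC; case: eqP hj => [->//|_]; case: eqP => [->//|_] _;
    by rewrite subr0 ?oppr0.
  rewrite coef0 -signr_odd; case: (odd _); rewrite ?expr1 ?expr0 ?mulN1r ?mul1r ?coefN;
  rewrite coefB coefX coefC /= subr0 ?itN it1 ?mulrN1 ?mulr1 ?oppr_eq0;
  by move=> /eqP; rewrite ?oppr_eq0 lead_coef_eq0 (negbTE p0).
move=> b; have [->//|] := eqVneq b (setT, true); exact: hT.
Qed.
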